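(* Let $a_1,a_2,\dots$ and $b_0,b_1,\dots$ be arbitrary sequences of real numbers, let $0<p<1$, and let $J\subset\mathbb{Z}^+$ be a set of indices such that $a_j=0$ for all $j\in J$. Then \[ \sum_{m=1}^\infty\left|\frac{1}{mp}\sum_{k=1}^m b_{m-k}\,k\,a_k\sqrt{B(m,k,p)}\right|^2 \leqslant\left(\sum_{k\in\mathbb{Z}^+\setminus J}p^{k-2}\right)b_0^2\left(\sum_{k=1}^\infty a_k^2\right)+C_J(p)\left(\sum_{k=1}^\infty a_k^2\right)\left(\sum_{j=1}^\infty b_j^2\right). \]
   Context: $\mathbb{Z}^+$ denotes the set of positive integers. $B(m,k,p)=\binom{m}{k}p^k(1-p)^{m-k}$. For $J\subset\mathbb{Z}^+$, $s\in\mathbb{Z}^+$ and $0<p<1$, \[ h_J(s,p)=\frac{(1-p)^s}{p^2}\sum_{k\in\mathbb{Z}^+\setminus J}\frac{k^2}{(k+s)^2}\binom{k+s}{k}p^k,\qquad C_J(p)=\max_{s\in\mathbb{Z}^+}h_J(s,p). \] *)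

(* Defs.v *)
From mathcomp Require Import all_boot all_order all_algebra.
From mathcomp Require Import all_classical all_reals all_analysis.
Set Implicit Arguments. Unset Strict Implicit. Unset Printing Implicit Defensive.
Import Order.TTheory GRing.Theory Num.Theory.
Local Open Scope classical_set_scope.
Local Open Scope ring_scope.

Definition Bin {R : realType} (m k : nat) (p : R) : R :=
  'C(m, k)%:R * p ^+ k * (1 - p) ^+ (m - k).

Definition hJ {R : realType} (J : set nat) (s : nat) (p : R) : \bar R :=
  (((1 - p) ^+ s / p ^+ 2)%:E *
   \sum_(1 <= k <oo | k \notin J)
      ((k%:R ^+ 2 / (k + s)%:R ^+ 2 * 'C(k + s, k)%:R * p ^+ k)%:E))%E.

(* C_J(p) = max_{s in Z^+} h_J(s,p), taken as the supremum (equal to the max when attained) *)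
Definition CJ {R : realType} (J : set nat) (p : R) : \bar R :=
  ereal_sup [set hJ J s p | s in [set s : nat | (0 < s)%N]].

(* Main.v *)
Require Import Defs.
From mathcomp Require Import all_boot all_order all_algebra.
From mathcomp Require Import all_classical all_reals all_analysis.
From mathcomp Require Import ring lra zify.
Import Order.TTheory GRing.Theory Num.Theory.
Local Open Scope classical_set_scope.
Local Open Scope ring_scope.

Lemma cs_sum (R : realFieldType) (n0 n : nat) (x y : nat -> R) :
  (\sum_(n0 <= k < n) x k * y k) ^+ 2 <=
  (\sum_(n0 <= k < n) x k ^+ 2) * (\sum_(n0 <= k < n) y k ^+ 2).
Proof.
set S := \sum_(n0 <= k < n) x k * y k.
set X := \sum_(n0 <= k < n) x k ^+ 2.
set Y := \sum_(n0 <= k < n) y k ^+ 2.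
have E : \sum_(n0 <= i < n) \sum_(n0 <= j < n) (x i * y j - x j * y i) ^+ 2
   = 2 * (X * Y - S ^+ 2).
  have H : forall i j, (x i * y j - x j * y i) ^+ 2 =
     x i ^+ 2 * y j ^+ 2 + y i ^+ 2 * x j ^+ 2 - 2 * (x i * y i) * (x j * y j).
    by move=> i j; ring.
  under eq_bigr do under eq_bigr do rewrite H.
  under eq_bigr do rewrite sumrB big_split /= -!mulr_sumr.
  rewrite sumrB big_split /= -/X -/Y -/S -!mulr_suml -/X -/Y -/S -mulr_sumr -/S; ring.
have : 0 <= 2 * (X * Y - S ^+ 2).
  by rewrite -E; apply: sumr_ge0 => i _; apply: sumr_ge0 => j _; exact: sqr_ge0.
rewrite pmulr_rge0 // subr_ge0 //.
Qed.

Lemma exch (R : nmodType) (F : nat -> nat -> R) N :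
  \sum_(1 <= m < N.+1) \sum_(1 <= k < m.+1) F (m - k)%N k =
  \sum_(0 <= j < N) \sum_(1 <= k < (N - j).+1) F j k.
Proof.
elim: N => [|N IH]; first by rewrite !big_geq.
rewrite big_nat_recr //= IH.
have H1 : \sum_(0 <= j < N.+1) \sum_(1 <= k < (N.+1 - j).+1) F j k =
  \sum_(0 <= j < N.+1) \sum_(1 <= k < (N - j).+1) F j k +
  \sum_(0 <= j < N.+1) F j (N.+1 - j)%N.
  rewrite -big_split /=; apply: eq_big_nat => j /andP[_ hj].
  have -> : (N.+1 - j = (N - j).+1)%N by rewrite subSn.
  by rewrite big_nat_recr.
rewrite H1 [in RHS]big_nat_recr //= subnn [X in _ + X + _]big_geq // addr0.
congr (_ + _).
rewrite big_nat_rev /= big_add1 /=.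
apply: eq_big_nat => i /andP[_ hi].
congr (F _ _); lia.
Qed.

Lemma eqle (R : numDomainType) (x y : R) : x = y -> x <= y.
Proof. by move=> ->. Qed.

Lemma Bin_ge0 (R : realType) m k (p : R) : 0 <= p -> p <= 1 -> 0 <= Bin m k p.
Proof.
move=> h0 h1; rewrite /Bin; apply: mulr_ge0; first apply: mulr_ge0.
- exact: ler0n.
- exact: exprn_ge0.
- by apply: exprn_ge0; rewrite subr_ge0.
Qed.

Section M.
Variables (R : realType) (a b : nat -> R) (p : R) (J : set nat).
Hypotheses (hp0 : 0 < p) (hp1 : p < 1) (haJ : forall j, J j -> a j = 0).

Definition cc m := ((m%:R * p)^-1 *
        \sum_(1 <= k < m.+1) b (m - k)%N * k%:R * a k * Num.sqrt (Bin m k p)).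
Definition XX m k := if k \in J then 0 else b (m - k)%N * k%:R * Num.sqrt (Bin m k p) / (m%:R * p).
Definition FF j k := if k \in J then 0 else
   b j ^+ 2 * (k%:R ^+ 2 * Bin (j + k) k p / ((j + k)%:R ^+ 2 * p ^+ 2)).

Lemma cc_eq m : cc m = \sum_(1 <= k < m.+1) XX m k * a k.
Proof.
rewrite /cc mulr_sumr; apply: eq_big_nat => k _.
rewrite /XX; case: ifP => [/set_mem /haJ -> | _]; first by rewrite !(mulr0, mul0r).
ring.
Qed.

Lemma XX2 m k : (1 <= k <= m)%N -> XX m k ^+ 2 = FF (m - k)%N k.
Proof.
move=> /andP[k1 km]; rewrite /XX /FF; case: ifP => _; first by rewrite expr0n.
rewrite subnK //.
have hm : m%:R != 0 :> R by rewrite pnatr_eq0 -lt0n; lia.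
have hp : p != 0 by rewrite gt_eqF.
have hB := @Bin_ge0 R m k p (ltW hp0) (ltW hp1).
rewrite !exprMn exprVn sqr_sqrtr //; field.
by rewrite hm hp.
Qed.


Definition TT N j := (1 - p) ^+ j / p ^+ 2 * \sum_(1 <= k < (N - j).+1 | k \notin J)
   (k%:R ^+ 2 / (k + j)%:R ^+ 2 * 'C(k + j, k)%:R * p ^+ k).

Lemma main_real N : (0 < N)%N ->
 \sum_(1 <= m < N.+1) cc m ^+ 2 <= (\sum_(1 <= k < N.+1) a k ^+ 2) *
   (b 0%N ^+ 2 * \sum_(1 <= k < N.+1 | k \notin J) (p ^+ k / p ^+ 2)
    + \sum_(1 <= j < N) b j ^+ 2 * TT N j).
Proof.
move=> hN.
have hp : p != 0 by rewrite gt_eqF.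
set AN := \sum_(1 <= k < N.+1) a k ^+ 2.
have step1 : forall m, (1 <= m <= N)%N ->
    cc m ^+ 2 <= (\sum_(1 <= k < m.+1) FF (m - k)%N k) * AN.
  move=> m /andP[m1 mN].
  rewrite cc_eq; apply: le_trans (cs_sum _ _ _ _ _) _.
  apply: ler_pM.
  - apply: sumr_ge0 => k _; exact: sqr_ge0.
  - apply: sumr_ge0 => k _; exact: sqr_ge0.
  - apply: eqle; apply/eq_big_nat => k hk; exact: XX2.
  - have hmN : (m.+1 <= N.+1)%N by lia.
    rewrite /AN (@big_cat_nat _ _ _ m.+1 1 N.+1) //=.
    rewrite lerDl; apply: sumr_ge0 => k _; exact: sqr_ge0.
apply: le_trans (_ : \sum_(1 <= m < N.+1) (\sum_(1 <= k < m.+1) FF (m - k)%N k) * AN <= _).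
  apply: ler_sum_nat => m hm; apply: step1; lia.
rewrite -mulr_suml exch mulrC; apply: eqle; congr (_ * _).
rewrite big_ltn // subn0; congr (_ + _).
  rewrite [in RHS]big_mkcond /= mulr_sumr; apply: eq_big_nat => k /andP[k1 _].
  rewrite /FF; case: ifP => kJ /=; first by rewrite mulr0.
  have hk : k%:R != 0 :> R by rewrite pnatr_eq0 -lt0n.
  rewrite add0n /Bin binn subnn expr0 mulr1 mul1r; field.
  by rewrite hk hp.
apply: eq_big_nat => j /andP[j1 jN]; rewrite /TT.
rewrite [in RHS]big_mkcond /= !mulr_sumr; apply: eq_bigr => k _.
rewrite /FF; case: ifP => kJ /=; first by rewrite !mulr0.
have hk : (k + j)%:R != 0 :> R by rewrite pnatr_eq0 addn_eq0 negb_and -!lt0n j1 orbT.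
rewrite /Bin addnK (addnC j k); field.
by rewrite -natrD hk hp.
Qed.

End M.

Lemma TT_ge0 (R : realType) (p : R) (J : set nat) N j : 0 < p -> p < 1 -> 0 <= TT R p J N j.
Proof.
move=> h0 h1; rewrite /TT; apply: mulr_ge0.
  apply: divr_ge0; apply: exprn_ge0; [by rewrite subr_ge0 ltW | exact: ltW].
apply: sumr_ge0 => k _; apply: mulr_ge0; last by apply: exprn_ge0; exact: ltW.
apply: mulr_ge0 => //; apply: divr_ge0; exact: sqr_ge0.
Qed.

Theorem lemma1 (R : realType) (a b : nat -> R) (p : R) (J : set nat)
  (hp0 : 0 < p) (hp1 : p < 1)
  (hJpos : J `<=` [set k : nat | (0 < k)%N])
  (haJ : forall j, J j -> a j = 0) :
  (\sum_(1 <= m <oo)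
     (((m%:R * p)^-1 *
        \sum_(1 <= k < m.+1) b (m - k)%N * k%:R * a k * Num.sqrt (Bin m k p)) ^+ 2)%:E
   <= (\sum_(1 <= k <oo | k \notin J) (p ^+ k / p ^+ 2)%:E) * (b 0%N ^+ 2)%:E
        * (\sum_(1 <= k <oo) (a k ^+ 2)%:E)
      + CJ J p * (\sum_(1 <= k <oo) (a k ^+ 2)%:E)
        * (\sum_(1 <= j <oo) (b j ^+ 2)%:E))%E.
Proof.
set A := (\sum_(1 <= k <oo) (a k ^+ 2)%:E)%E.
set Bs := (\sum_(1 <= j <oo) (b j ^+ 2)%:E)%E.
set S0 := (\sum_(1 <= k <oo | k \notin J) (p ^+ k / p ^+ 2)%:E)%E.
have hJ_ge0 : forall j, (0 <= hJ J j p)%E.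
  move=> j; rewrite /hJ; apply: mule_ge0.
    rewrite lee_fin; apply: divr_ge0; apply: exprn_ge0; [by rewrite subr_ge0 ltW | exact: ltW].
  apply: nneseries_ge0 => k _ _; rewrite lee_fin; apply: mulr_ge0; last by apply: exprn_ge0; exact: ltW.
  apply: mulr_ge0 => //; apply: divr_ge0; exact: sqr_ge0.
have hJC : forall j, (0 < j)%N -> (hJ J j p <= CJ J p)%E.
  by move=> j hj; apply: ereal_sup_ubound; exists j.
have CJ0 : (0 <= CJ J p)%E by apply: le_trans (hJC 1%N isT); exact: hJ_ge0.
have TJ : forall N j, (0 < j)%N -> ((TT R p J N j)%:E <= CJ J p)%E.
  move=> N j hj; apply: le_trans (hJC j hj); rewrite /TT /hJ EFinM.
  apply: lee_wpmul2l.
    rewrite lee_fin; apply: divr_ge0; apply: exprn_ge0; [by rewrite subr_ge0 ltW | exact: ltW].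
  rewrite -sumEFin; apply: nneseries_lim_ge => k _ _; rewrite lee_fin.
  apply: mulr_ge0; last by apply: exprn_ge0; exact: ltW.
  apply: mulr_ge0 => //; apply: divr_ge0; exact: sqr_ge0.
apply: lime_le.
  by apply: is_cvg_nneseries => n _ _; rewrite lee_fin sqr_ge0 //.
near=> n.
have hn : (1 < n)%N by near: n; exists 2%N.
have [N eN] : exists N, n = N.+1 by exists n.-1; lia.
have hN : (0 < N)%N by lia.
rewrite eN.
rewrite sumEFin.
have H := @main_real R a b p J hp0 hp1 haJ N hN; rewrite -lee_fin in H.
apply: le_trans H _.
have SB0 : (0 <= Bs)%E by apply: nneseries_ge0 => k _ _; rewrite lee_fin sqr_ge0 //.
have SS0 : (0 <= S0)%E.
  apply: nneseries_ge0 => k _ _; rewrite lee_fin; apply: divr_ge0; apply: exprn_ge0; exact: ltW.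
have eqR : (S0 * (b 0%N ^+ 2)%:E * A + CJ J p * A * Bs =
   A * ((b 0%N ^+ 2)%:E * S0 + Bs * CJ J p))%E.
  rewrite ge0_muleDr; last 2 first.
  - by apply: mule_ge0 => //; rewrite lee_fin sqr_ge0 //.
  - exact: mule_ge0.
  congr (_ + _); first by rewrite muleC (muleC (b 0%N ^+ 2)%:E).
  by rewrite [RHS]muleA [RHS]muleC muleA.
rewrite eqR EFinM EFinD EFinM.
apply: lee_pmul.
- by rewrite lee_fin; apply: sumr_ge0 => k _; exact: sqr_ge0.
- rewrite lee_fin; apply: addr_ge0.
    apply: mulr_ge0; first exact: sqr_ge0.
    apply: sumr_ge0 => k _; apply: divr_ge0; apply: exprn_ge0; exact: ltW.
  apply: sumr_ge0 => j _; apply: mulr_ge0; first exact: sqr_ge0.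
  exact: TT_ge0.
- rewrite -sumEFin; apply: nneseries_lim_ge => k _ _; rewrite lee_fin sqr_ge0 //.
apply: leeD.
  apply: lee_wpmul2l; first by rewrite lee_fin sqr_ge0 //.
  rewrite -sumEFin; apply: nneseries_lim_ge => k _ _; rewrite lee_fin.
  apply: divr_ge0; apply: exprn_ge0; exact: ltW.
rewrite -sumEFin.
apply: (@le_trans _ _ (\sum_(1 <= j < N) ((b j ^+ 2)%:E * CJ J p))%E).
  rewrite big_nat_cond [X in (_ <= X)%E]big_nat_cond.
  apply: lee_sum => j /andP[/andP[hj _] _]; rewrite EFinM.
  apply: lee_wpmul2l; first by rewrite lee_fin sqr_ge0 //.
  exact: TJ.
rewrite -ge0_sume_distrl; last by move=> j _; rewrite lee_fin sqr_ge0 //.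
apply: lee_wpmul2r => //.
apply: nneseries_lim_ge => k _ _; rewrite lee_fin sqr_ge0 //.
Unshelve. all: by end_near.
Qed.
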